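(* Let $A,B$ be nondeterministic parity tree automata over $\Sigma$, let $g$ be a guiding function from $B$ to $A$ that preserves acceptance, let $t$ be a $\Sigma$-tree, let $\rho_B$ be an accepting run of $B$ on $t$ and $\rho_A=g(\rho_B)$ (an accepting run of $A$ on $t$). Let $u\in\{0,1\}^*$ and $v\in\{0,1\}^+$ be such that $\rho_A(u)=\rho_A(u\cdot v)$ and $\rho_B(u)=\rho_B(u\cdot v)$. If the greatest priority on the edges of $\rho_B$ between positions $u$ and $u\cdot v$ (i.e., on the edges from $u\cdot v|_k$ to $u\cdot v|_{k+1}$ for $k<|v|$) is even, then the greatest priority on the corresponding edges of $\rho_A$ is even.
   Context: A $\Sigma$-tree is $t:\{0,1\}^*\to\Sigma$; $v|_k$ is the length-$k$ prefix of $v$. A nondeterministic $I$-parity tree automaton ($I$ a finite interval of naturals) is $(\Sigma,Q,q_I,\Delta,\Omega)$ with $Q$ finite, $\Delta\subseteq Q\times\Sigma\times Q\times Q$ complete, $\Omega:\Delta\to I^2$. A run on $t$ is $\rho:\{0,1\}^*\to\Delta$ with $\rho(\varepsilon)$ from $q_I$, $\rho(u)=(q,t(u),q_0,q_1)$ and $\rho(u\cdot d)$ from $q_d$; the edge from $u$ to $u\cdot d$ has priority the $d$-th component of $\Omega(\rho(u))$. A run is accepting if on every branch the $\limsup$ of edge priorities is even. A guiding function from $B$ to $A$ is $g:Q_A\times\Delta_B\to\Delta_A$ with $g(p,(q,a,q_0,q_1))=(p,a,p_0,p_1)$; for a run $\rho$ of $B$ on $t$, $g(\rho)(u)=g(s(u),\rho(u))=(s(u),t(u),p_0,p_1)$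 where $s(\varepsilon)=q_{I,A}$ and $s(u\cdot d)=p_d$. It preserves acceptance if $g(\rho)$ is accepting whenever $\rho$ is. *)

(* Defs.v *)
From mathcomp Require Import all_boot.
Set Implicit Arguments. Unset Strict Implicit. Unset Printing Implicit Defensive.

(* Positions of the binary tree are words u : seq bool (false = 0, true = 1);
   u . d is [rcons u d], u . v is [u ++ v], v|_k is [take k v]. *)

Definition tuple4 (Sigma Q : Type) := (Q * Sigma * Q * Q)%type.

Record automaton (Sigma : finType) := Automaton {
  state : finType;
  qinit : state;
  delta : pred (tuple4 Sigma state);
  complete : forall (q : state) (a : Sigma),
      exists q0 q1, delta (q, a, q0, q1);
  omega : {x : tuple4 Sigma state | delta x} -> (nat * nat)%type
}.

Section Auto.
Variable Sigma : finType.

Definition trans (A : automaton Sigma) := {x : tuple4 Sigma (state A) | @delta _ A x}.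

Definition tsrc (A : automaton Sigma) (d : trans A) : state A := (sval d).1.1.1.
Definition tlet (A : automaton Sigma) (d : trans A) : Sigma := (sval d).1.1.2.
Definition tsucc (A : automaton Sigma) (d : trans A) (dir : bool) : state A :=
  if dir then (sval d).2 else (sval d).1.2.
Definition tprio (A : automaton Sigma) (d : trans A) (dir : bool) : nat :=
  if dir then (omega d).2 else (omega d).1.

Definition tree := seq bool -> Sigma.

Definition is_run (A : automaton Sigma) (t : tree) (rho : seq bool -> trans A) : Prop :=
  tsrc (rho [::]) = qinit A /\
  (forall u, tlet (rho u) = t u) /\
  (forall u (dir : bool), tsrc (rho (rcons u dir)) = tsucc (rho u) dir).

(* "the limsup of the sequence p is even" for p : nat -> nat
   (an unbounded sequence has limsup infinity, which is not even) *)
Definition limsup_even (p : nat -> nat) : Prop :=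
  exists m, ~~ odd m /\
    (forall N, exists2 n, N <= n & p n = m) /\
    (exists N, forall n, N <= n -> p n <= m).

Definition branch_prefix (beta : nat -> bool) (n : nat) : seq bool := mkseq beta n.

Definition accepting (A : automaton Sigma) (rho : seq bool -> trans A) : Prop :=
  forall beta : nat -> bool,
    limsup_even (fun n => tprio (rho (branch_prefix beta n)) (beta n)).

Record guiding (B A : automaton Sigma) := Guiding {
  gfun : state A -> trans B -> trans A;
  gfun_src : forall p d, tsrc (gfun p d) = p;
  gfun_let : forall p d, tlet (gfun p d) = tlet d
}.

Fixpoint gstate_aux (B A : automaton Sigma) (g : guiding B A)
    (rho : seq bool -> trans B) (pref : seq bool) (p : state A) (w : seq bool)
    : state A :=
  match w with
  | [::] => p
  | dir :: w' =>
      gstate_aux g rho (rcons pref dir) (tsucc (gfun g p (rho pref)) dir) w'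
  end.

Definition gstate (B A : automaton Sigma) (g : guiding B A)
    (rho : seq bool -> trans B) (u : seq bool) : state A :=
  gstate_aux g rho [::] (qinit A) u.

Definition guided (B A : automaton Sigma) (g : guiding B A)
    (rho : seq bool -> trans B) : seq bool -> trans A :=
  fun u => gfun g (gstate g rho u) (rho u).

Definition preserves_acceptance (B A : automaton Sigma) (g : guiding B A) : Prop :=
  forall (t : tree) (rho : seq bool -> trans B),
    is_run t rho -> accepting rho -> accepting (guided g rho).

Definition max_prio_between (A : automaton Sigma) (rho : seq bool -> trans A)
    (u v : seq bool) : nat :=
  \max_(k < size v) tprio (rho (u ++ take k v)) (nth false v k).

End Auto.

(* Main.v *)
Require Import Defs.
From mathcomp Require Import all_boot.
From mathcomp Require Import zify.
From Stdlib Require Import Classical.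
Set Implicit Arguments. Unset Strict Implicit.
Definition idx (a L n : nat) := if n < a then n else a + (n - a) %% L.

Lemma modS' m L : 0 < L -> m.+1 %% L = if (m %% L).+1 == L then 0 else (m %% L).+1.
Proof.
move=> L0; have Hr := ltn_pmod m L0.
rewrite {1}(divn_eq m L) -addnS.
case: eqP => E.
  by rewrite E -mulSnr modnMl.
by rewrite modnMDl modn_small //; lia.
Qed.

Lemma idx_lt a L n : 0 < L -> idx a L n < a + L.
Proof. move=> L0; rewrite /idx; case: (ltnP n a) => H. lia.
have := ltn_pmod (n - a) L0; lia. Qed.

Lemma idx0 a L : idx a L 0 = 0.
Proof. rewrite /idx; case: a => //=; by rewrite mod0n. Qed.

Lemma idxS a L n : 0 < L ->
  idx a L n.+1 = if (idx a L n).+1 == a + L then a else (idx a L n).+1.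
Proof.
move=> L0; rewrite /idx.
case: (ltnP n.+1 a) => H1.
  have -> : n < a by lia. case: eqP => //; lia.
case: (ltnP n a) => H2.
  have -> : n.+1 = a by lia. rewrite subnn mod0n addn0; case: eqP => //; lia.
have -> : n.+1 - a = (n - a).+1 by lia.
rewrite modS' //.
case: eqP => E; case: eqP => E'; lia.
Qed.
Lemma limsup_shift (P Q : nat -> nat) N S :
  (forall k, P (N + k) = Q (S + k)) -> limsup_even Q -> limsup_even P.
Proof.
move=> E [m [om [inf [N1 ev]]]]; exists m; split => //; split.
  move=> N0; have [n Hn Qn] := inf (N0 + S).
  exists (N + (n - S)); first lia.
  by rewrite E; have -> : S + (n - S) = n by lia.
exists (N + N1) => n Hn.
have -> : n = N + (n - N) by lia.
rewrite E; apply: ev; lia.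
Qed.

Lemma limsup_periodic (P b : nat -> nat) a L : 0 < L ->
  (forall k, P (a + k) = b (k %% L)) ->
  (limsup_even P <-> ~~ odd (\max_(k < L) b k)).
Proof.
move=> L0 E.
have [k0 Hk0] : {k0 : 'I_L | \max_(k < L) b k = b k0}.
  by apply: eq_bigmax; rewrite card_ord.
have Hle : forall n, a <= n -> P n <= \max_(k < L) b k.
  move=> n Hn; have -> : n = a + (n - a) by lia.
  rewrite E; exact: (leq_bigmax (F := fun k : 'I_L => b k) (Ordinal (ltn_pmod (n - a) L0))).
have Hinf : forall N, exists2 n, N <= n & P n = \max_(k < L) b k.
  move=> N; exists (a + (N * L + k0)); first by have := leq_pmull N L0; lia.
  by rewrite E modnMDl modn_small // Hk0.
split.
- move=> [m [om [inf [N1 ev]]]].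
  have [n1 Hn1 Pn1] := inf a.
  have [n2 Hn2 Pn2] := Hinf N1.
  have h1 := Hle _ Hn1. have h2 := ev _ Hn2.
  have -> : \max_(k < L) b k = m by lia.
  exact om.
- move=> om; exists (\max_(k < L) b k); split => //; split => //.
  by exists a.
Qed.



Section S.
Variable Sigma : finType.

Lemma gstate_aux_rcons (B A : automaton Sigma) (g : guiding B A) rho pref p w d :
  gstate_aux g rho pref p (rcons w d) =
  tsucc (gfun g (gstate_aux g rho pref p w) (rho (pref ++ w))) d.
Proof.
elim: w pref p => [|x w IH] pref p /=; first by rewrite cats0.
by rewrite IH cat_rcons.
Qed.

Lemma gstate_rcons (B A : automaton Sigma) (g : guiding B A) rho w d :
  gstate g rho (rcons w d) = tsucc (guided g rho w) d.
Proof. by rewrite /gstate gstate_aux_rcons. Qed.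

Lemma bp_S beta n : branch_prefix beta n.+1 = rcons (branch_prefix beta n) (beta n).
Proof. exact: mkseqS. Qed.

Variables u v : seq bool.

Definition fstep (x : seq bool) (d : bool) :=
  if rcons x d == u ++ v then u else rcons x d.
Definition fld (w : seq bool) := foldl fstep [::] w.

Lemma fld_rcons w d : fld (rcons w d) = fstep (fld w) d.
Proof. by rewrite /fld foldl_rcons. Qed.

Lemma loop_prio (C : automaton Sigma) (sigma : seq bool -> trans C) beta :
  (forall n, fld (branch_prefix beta n) = take (idx (size u) (size v) n) (u ++ v)
      /\ beta n = nth false (u ++ v) (idx (size u) (size v) n)) ->
  forall k, tprio (sigma (fld (branch_prefix beta (size u + k)))) (beta (size u + k))
    = (fun j => tprio (sigma (u ++ take j v)) (nth false v j)) (k %% size v).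
Proof.
move=> H k; have [-> ->] := H (size u + k).
have -> : idx (size u) (size v) (size u + k) = size u + k %% size v.
  rewrite /idx ifF; last lia. by rewrite addKn.
rewrite takeD take_size_cat // drop_size_cat // nth_cat ifF; last lia.
by rewrite addKn.
Qed.

Definition good (x : seq bool) := (size x < size (u ++ v)) && (x == take (size x) (u ++ v)).

Lemma bad_step x d : ~~ good x -> fstep x d = rcons x d /\ ~~ good (rcons x d).
Proof.
move=> Hb; split.
  rewrite /fstep; case: eqP => // E; case/negP: Hb.
  rewrite /good -E size_rcons ltnSn /= -cats1 take_size_cat //.
apply: contra Hb; rewrite /good size_rcons => /andP [H1 /eqP H2].
apply/andP; split; first lia.
apply/eqP; have := congr1 (take (size x)) H2; rewrite take_takel // => <-; by rewrite -cats1 take_size_cat.  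
Qed.


Lemma deviate beta N : ~~ good (fld (branch_prefix beta N)) -> forall k,
  fld (branch_prefix beta (N + k)) = fld (branch_prefix beta N) ++ mkseq (fun i => beta (N + i)) k
  /\ ~~ good (fld (branch_prefix beta (N + k))).
Proof.
move=> Hb; elim=> [|k [IH1 IH2]]; first by rewrite addn0 cats0.
rewrite addnS bp_S fld_rcons; have [-> Hb'] := bad_step (beta (N + k)) IH2.
split; last exact Hb'. by rewrite IH1 mkseqS rcons_cat.
Qed.

Lemma caseB beta : 0 < size v -> (forall n, good (fld (branch_prefix beta n))) ->
  forall n, fld (branch_prefix beta n) = take (idx (size u) (size v) n) (u ++ v)
      /\ beta n = nth false (u ++ v) (idx (size u) (size v) n).
Proof.
move=> hv Hg.
pose i n := size (fld (branch_prefix beta n)).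
have Hx : forall n, fld (branch_prefix beta n) = take (i n) (u ++ v).
  by move=> n; have /andP [_ /eqP] := Hg n.
have Hi : forall n, i n < size (u ++ v).
  by move=> n; have /andP [] := Hg n.
have Hstep : forall n, i n.+1 = (if (i n).+1 == size u + size v then size u else (i n).+1)
     /\ beta n = nth false (u ++ v) (i n).
  move=> n.
  have Hs : take (i n).+1 (u ++ v) = rcons (take (i n) (u ++ v)) (nth false (u ++ v) (i n)).
    exact: take_nth.
  rewrite /i bp_S fld_rcons /fstep -/(i n).
  case: eqP => E.
    have Es : (i n).+1 = size u + size v by have := congr1 size E; rewrite size_rcons size_cat.
    rewrite Es eqxx; split => //.
    have Hfull : take (i n).+1 (u ++ v) = u ++ v by rewrite take_oversize // Es size_cat.
    have E' : rcons (take (i n) (u ++ v)) (beta n) = rcons (take (i n) (u ++ v)) (nth false (u ++ v) (i n)).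
      by rewrite -Hs Hfull -(Hx n).
    by case: (rcons_inj E').
  have Hg1 := Hg n.+1; rewrite /good bp_S fld_rcons /fstep ifF in Hg1; last by apply/eqP.
  move: Hg1; rewrite size_rcons -/(i n) => /andP [H1 /eqP H2].
  rewrite ifF; last by apply/eqP; move: H1; rewrite size_cat; lia.
  split => //.
  move: H2; rewrite Hs {1}(Hx n) => H2. by case: (rcons_inj H2).
have Hid : forall n, i n = idx (size u) (size v) n.
  elim=> [|m IH]; first by rewrite idx0.
  by rewrite idxS // -IH; case: (Hstep m).
move=> n; rewrite -Hid; split; first exact: Hx.
by case: (Hstep n).
Qed.

Lemma loopA beta : 0 < size v ->
  (forall n, beta n = nth false (u ++ v) (idx (size u) (size v) n)) ->
  forall n, fld (branch_prefix beta n) = take (idx (size u) (size v) n) (u ++ v)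
      /\ beta n = nth false (u ++ v) (idx (size u) (size v) n).
Proof.
move=> hv Hb; elim=> [|n [IH1 IH2]]; first by split; [rewrite idx0 take0 | exact: Hb].
split; last exact: Hb.
have Hlt := idx_lt (size u) n hv.
rewrite bp_S fld_rcons IH1 IH2 /fstep -take_nth ?size_cat // idxS //.
case: eqP => E.
  have Es : (idx (size u) (size v) n).+1 = size u + size v.
    by have := congr1 size E; rewrite size_takel ?size_cat.
  by rewrite Es eqxx take_size_cat.
rewrite ifF //; apply/eqP => E2; apply: E.
by rewrite take_oversize // E2 size_cat.
Qed.

End S.

Theorem lemma1 (Sigma : finType) (A B : automaton Sigma) (g : guiding B A)
    (t : tree Sigma) (rhoB : seq bool -> trans B) :
  preserves_acceptance g ->
  is_run t rhoB -> accepting rhoB ->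
  forall u v : seq bool, v != [::] ->
  guided g rhoB u = guided g rhoB (u ++ v) ->
  rhoB u = rhoB (u ++ v) ->
  ~~ odd (max_prio_between rhoB u v) ->
  ~~ odd (max_prio_between (guided g rhoB) u v).
Proof.
move=> Hpres [Hr1 [Hr2 Hr3]] HaccB u v vnil Hgu Hru Hmax.
have hv : 0 < size v by move: vnil; case: (v) => //.
pose rho' := fun w => rhoB (fld u v w).
have Hrun : is_run (fun w => t (fld u v w)) rho'.
  split; first exact: Hr1.
  split; first by move=> w; exact: Hr2.
  move=> w d; rewrite /rho' fld_rcons /fstep.
  case: eqP => E; last exact: Hr3.
  by rewrite Hru -E Hr3.
have Hacc : accepting rho'.
  move=> beta.
  case: (classic (exists N, ~~ good u v (fld u v (branch_prefix beta N)))).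
  - move=> [N HN].
    pose x := fld u v (branch_prefix beta N).
    pose beta' := fun n => if n < size x then nth false x n else beta (N + (n - size x)).
    have Hb' : forall k, branch_prefix beta' (size x + k) = x ++ mkseq (fun i => beta (N + i)) k.
      elim=> [|k IH].
        rewrite addn0 cats0 /branch_prefix.
        apply: (@eq_from_nth _ false); first by rewrite size_mkseq.
        move=> i; rewrite size_mkseq => Hi; rewrite nth_mkseq // /beta' Hi //.
      rewrite addnS bp_S IH mkseqS rcons_cat /beta' ifF; last lia.
      by have -> : size x + k - size x = k by lia.
    apply: (@limsup_shift _ (fun n => tprio (rhoB (branch_prefix beta' n)) (beta' n)) N (size x)); last exact: HaccB.
    move=> k /=; rewrite /rho' Hb'.
    have [-> _] := deviate HN k.
    rewrite /beta' ifF; last lia.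
    by have -> : size x + k - size x = k by lia.
  - move=> Hn.
    have Hg : forall n, good u v (fld u v (branch_prefix beta n)).
      move=> n; apply: negbNE; apply/negP => Hb; apply: Hn; by exists n.
    have HB := caseB hv Hg.
    apply/(@limsup_periodic _ (fun j => tprio (rhoB (u ++ take j v)) (nth false v j)) (size u) (size v) hv); last exact: Hmax.
    move=> k; exact: (loop_prio rhoB HB k).
have Hgs : forall w, gstate g rho' w = gstate g rhoB (fld u v w).
  elim/last_ind => [|w d IH]; first by [].
  rewrite !gstate_rcons fld_rcons /fstep /guided IH.
  case: eqP => E.
    rewrite -[tsucc _ d]/(tsucc (guided g rhoB (fld u v w)) d) -gstate_rcons E.
    have := congr1 (@tsrc _ A) Hgu; rewrite /guided !gfun_src => ->. by [].
  by rewrite gstate_rcons.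
have Hgd : forall w, guided g rho' w = guided g rhoB (fld u v w).
  by move=> w; rewrite /guided Hgs.
have HaccA := Hpres _ _ Hrun Hacc.
pose betaA := fun n => nth false (u ++ v) (idx (size u) (size v) n).
have HA := loopA (beta := betaA) hv (fun n => erefl).
have := HaccA betaA.
move/(@limsup_periodic _ (fun j => tprio (guided g rhoB (u ++ take j v)) (nth false v j)) (size u) (size v) hv).
apply.
move=> k /=; rewrite Hgd; exact: (loop_prio (guided g rhoB) HA k).
Qed.
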